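(* In $\mathcal{K}(m)$ (for $m$ large enough that all indices occur) the following equations hold: \begin{align*} 9z(3,\{1,2,3\})&=z(2,\{1,2\})z(2,\{3\})-z(2,\{1,3\})z(2,\{2\})+z(2,\{2,3\})z(2,\{1\})\\ &\quad+z(1,\{1,2\})z(3,\{3\})-z(1,\{1,3\})z(3,\{2\})+z(1,\{2,3\})z(3,\{1\}),\\ 9z(5,\{1,2,3\})&=z(4,\{1,2\})z(2,\{3\})-z(4,\{1,3\})z(2,\{2\})+z(4,\{2,3\})z(2,\{1\})\\ &\quad+z(3,\{1,2\})z(3,\{3\})-z(3,\{1,3\})z(3,\{2\})+z(3,\{2,3\})z(3,\{1\}),\\ 3z(4,\{1,2\})&=z(3,\{1\})z(2,\{2\})+z(2,\{1\})z(3,\{2\}),\\ 3z(6,\{1,2\})&=z(5,\{1\})z(2,\{2\})+z(4,\{1\})z(3,\{2\}),\\ z(6,\emptyset)&=0. \end{align*}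
   Context: $\mathcal{K}(m)=\mathbb{Q}[x,y,w]/(x+y+w,x^2+y^2+w^2,x^6+y^6+w^6)\otimes\bigotimes_{j=1}^m\Lambda(\alpha_j,\beta_j,\gamma_j)/(\alpha_j+\beta_j+\gamma_j)$, a graded-commutative algebra with $|x|=|y|=|w|=2$ and $|\alpha_j|=|\beta_j|=|\gamma_j|=1$. For $I=\{i_1<\dots<i_k\}\subset\{1,\dots,m\}$, $\alpha_I=\alpha_{i_1}\cdots\alpha_{i_k}$ ($\alpha_\emptyset=1$), similarly $\beta_I,\gamma_I$; for $d\ge0$, $z(d+1,I)=x^d\alpha_I+y^d\beta_I+w^d\gamma_I$. *)

(* Defs.v *)
From HB Require Import structures.
From mathcomp Require Import all_boot all_order all_algebra.
From mathcomp Require Import mpoly.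
Set Implicit Arguments. Unset Strict Implicit. Unset Printing Implicit Defensive.
Import Order.TTheory GRing.Theory Num.Theory.
Local Open Scope ring_scope.

(* Odd generators of the free graded-commutative algebra: for j : 'I_m,
   (j,0) = alpha_(j+1), (j,1) = beta_(j+1), (j,2) = gamma_(j+1). *)
Definition OddGen (m : nat) := ('I_m * 'I_3)%type.

(* total order on odd generators used for the exterior sign convention *)
Definition code (m : nat) (p : OddGen m) : nat := (3 * p.1 + p.2)%N.

(* The free graded-commutative Q-algebra  Q[x,y,w] (x) Lambda(alpha_j,beta_j,gamma_j)
   as a vector space: the coefficient (in Q[x,y,w]) of each exterior monomial e_S,
   S a set of odd generators (e_S = product of its elements in increasing code order). *)
Definition GC (m : nat) := {ffun {set OddGen m} -> {mpoly rat[3]}}.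

(* sign of e_A * e_B = sign * e_(A u B) for disjoint A, B *)
Definition esign (m : nat) (A B : {set OddGen m}) : {mpoly rat[3]} :=
  (-1) ^+ #|[set ab : OddGen m * OddGen m |
              [&& ab.1 \in A, ab.2 \in B & (code ab.2 < code ab.1)%N]]|.

Definition gmul (m : nat) (f g : GC m) : GC m :=
  [ffun S => \sum_(A : {set OddGen m}) \sum_(B : {set OddGen m} |
        (A :&: B == set0) && (A :|: B == S)) esign A B * (f A * g B)].

Definition ev (m : nat) (p : {mpoly rat[3]}) : GC m :=
  [ffun S => if S == set0 then p else 0].

Definition gone (m : nat) : GC m := ev m 1.

Definition odd_gen (m : nat) (p : OddGen m) : GC m :=
  [ffun S => if S == [set p] then 1 else 0].

Definition xv : {mpoly rat[3]} := 'X_(0 : 'I_3).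
Definition yv : {mpoly rat[3]} := 'X_(1 : 'I_3).
Definition wv : {mpoly rat[3]} := 'X_(2 : 'I_3).

Definition alpha (m : nat) (j : 'I_m) : GC m := odd_gen (j, 0 : 'I_3).
Definition beta  (m : nat) (j : 'I_m) : GC m := odd_gen (j, 1 : 'I_3).
Definition gamma (m : nat) (j : 'I_m) : GC m := odd_gen (j, 2 : 'I_3).

(* alpha_I = alpha_(i1) ... alpha_(ik) for I = {i1 < ... < ik}; alpha_emptyset = 1
   (enum I lists I in increasing order) *)
Definition prodI (m : nat) (g : 'I_m -> GC m) (I : {set 'I_m}) : GC m :=
  foldr (@gmul m) (gone m) (map g (enum I)).

Definition z (m : nat) (k : nat) (I : {set 'I_m}) : GC m :=
  gmul (ev m (xv ^+ k.-1)) (prodI (@alpha m) I)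
  + gmul (ev m (yv ^+ k.-1)) (prodI (@beta m) I)
  + gmul (ev m (wv ^+ k.-1)) (prodI (@gamma m) I).

Definition rel1 : {mpoly rat[3]} := xv + yv + wv.
Definition rel2 : {mpoly rat[3]} := xv ^+ 2 + yv ^+ 2 + wv ^+ 2.
Definition rel6 : {mpoly rat[3]} := xv ^+ 6 + yv ^+ 6 + wv ^+ 6.
Definition ell (m : nat) (j : 'I_m) : GC m := alpha j + beta j + gamma j.

(* Equality in K(m): u - v lies in the ideal generated by x+y+w, x^2+y^2+w^2,
   x^6+y^6+w^6 and alpha_j+beta_j+gamma_j.  (The generators are homogeneous in a
   graded-commutative algebra, so the left ideal they generate is two-sided.) *)
Definition Keq (m : nat) (u v : GC m) : Prop :=
  exists (a b c : GC m) (d : {ffun 'I_m -> GC m}),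
    u - v = gmul (ev m rel1) a + gmul (ev m rel2) b + gmul (ev m rel6) c
            + \sum_(j : 'I_m) gmul (ell j) (d j).

(* 1-based index sets: idx m s = { i in {1..m} | i in s } as a subset of 'I_m *)
Definition idx (m : nat) (s : seq nat) : {set 'I_m} :=
  [set i : 'I_m | (val i).+1 \in s].

(* Main.v *)
Require Import Defs.
From HB Require Import structures.
From mathcomp Require Import all_boot all_order all_algebra.
From mathcomp Require Import mpoly.
From mathcomp Require Import ring zify.
Import GRing.Theory.
Local Open Scope ring_scope.

Section Gen.
Variable m : nat.
Local Notation P := {mpoly rat[3]}.
Local Notation GCm := (GC m).

Implicit Types (S : {set OddGen m}).
Definition mono (S : {set OddGen m}) (p : P) : GCm :=
  [ffun T => if T == S then p else 0].

Lemma mono0 S : mono S 0 = 0.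
Proof. by apply/ffunP => T; rewrite !ffunE; case: ifP. Qed.

Lemma monoD S p q : mono S (p + q) = mono S p + mono S q.
Proof. by apply/ffunP => T; rewrite !ffunE; case: ifP; rewrite ?addr0. Qed.

Lemma monoN S p : mono S (- p) = - mono S p.
Proof. by apply/ffunP => T; rewrite !ffunE; case: ifP; rewrite ?oppr0. Qed.

Lemma monoMn S p n : mono S (p *+ n) = mono S p *+ n.
Proof.
elim: n => [|n IH]; first by rewrite !mulr0n mono0.
by rewrite !mulrS monoD IH.
Qed.

Lemma gmul0l g : gmul 0 g = 0 :> GCm.
Proof.
apply/ffunP => S; rewrite !ffunE big1 // => A _; apply: big1 => B _.
by rewrite ffunE mul0r mulr0.
Qed.

Lemma gmul0r g : gmul g 0 = 0 :> GCm.
Proof.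
apply/ffunP => S; rewrite !ffunE big1 // => A _; apply: big1 => B _.
by rewrite ffunE mulr0 mulr0.
Qed.

Lemma gmulDl f g h : gmul (f + g) h = gmul f h + gmul g h :> GCm.
Proof.
apply/ffunP => S; rewrite !ffunE -big_split; apply: eq_bigr => A _.
rewrite -big_split; apply: eq_bigr => B _; rewrite !ffunE.
by rewrite mulrDl mulrDr.
Qed.

Lemma gmulDr f g h : gmul h (f + g) = gmul h f + gmul h g :> GCm.
Proof.
apply/ffunP => S; rewrite !ffunE -big_split; apply: eq_bigr => A _.
rewrite -big_split; apply: eq_bigr => B _; rewrite !ffunE.
by rewrite mulrDr mulrDr.
Qed.

Lemma gmulNl f g : gmul (- f) g = - gmul f g :> GCm.
Proof.
apply/ffunP => S; rewrite !ffunE -sumrN; apply: eq_bigr => A _.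
rewrite -sumrN; apply: eq_bigr => B _; rewrite !ffunE.
by rewrite mulNr mulrN.
Qed.

Lemma gmul_suml (I : Type) (r : seq I) (Q : pred I) (F : I -> GCm) g :
  gmul (\sum_(i <- r | Q i) F i) g = \sum_(i <- r | Q i) gmul (F i) g.
Proof.
exact: (big_morph (fun f => gmul f g) (fun a b => gmulDl a b g) (gmul0l g)).
Qed.

Lemma gmul_sumr (I : Type) (r : seq I) (Q : pred I) (F : I -> GCm) g :
  gmul g (\sum_(i <- r | Q i) F i) = \sum_(i <- r | Q i) gmul g (F i).
Proof.
exact: (big_morph (fun f => gmul g f) (fun a b => gmulDr a b g) (gmul0r g)).
Qed.

Lemma gmul_mono S1 S2 p q :
  gmul (mono S1 p) (mono S2 q) =
  if S1 :&: S2 == set0 then mono (S1 :|: S2) (esign S1 S2 * (p * q)) else 0.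
Proof.
apply/ffunP => S; rewrite !ffunE.
rewrite (bigD1 S1) //= [X in _ + X]big1 ?addr0; last first.
  move=> A /negbTE nA; apply: big1 => B _; rewrite !ffunE nA mul0r mulr0 //.
under eq_bigr => B _ do rewrite !ffunE eqxx.
case: (boolP ((S1 :&: S2 == set0) && (S1 :|: S2 == S))) => H.
  rewrite (bigD1 S2) //= [X in _ + X]big1 ?addr0; last first.
    by move=> B /andP[_ /negbTE ->]; rewrite !mulr0.
  rewrite eqxx; move/andP: H => [-> /eqP <-]; by rewrite ffunE eqxx.
rewrite big1; last first.
  move=> B HB; case: eqP => [eB|]; last by rewrite !mulr0.
  by subst; rewrite HB in H.
case: ifP => h1; rewrite ?ffunE //.
case: eqP => // eS; subst; by rewrite h1 eqxx in H.
Qed.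

Lemma esign0l (S : {set OddGen m}) : esign set0 S = 1 :> P.
Proof.
rewrite /esign (_ : [set _ | _] = set0) ?cards0 ?expr0 //.
by apply/setP => -[a b]; rewrite !inE.
Qed.

Lemma gmul_ev_mono p S q : gmul (ev m p) (mono S q) = mono S (p * q).
Proof.
rewrite (_ : ev m p = mono set0 p) // gmul_mono set0I eqxx set0U esign0l.
by rewrite mul1r.
Qed.

Definition col := {ffun 'I_m -> 'I_3}.
Definition key (A : {set 'I_m}) (f : col) : {set OddGen m} :=
  [set p | (p.1 \in A) && (p.2 == f p.1)].
Definition restr (A : {set 'I_m}) (f : col) : col :=
  [ffun i => if i \in A then f i else 0].
Definition merge (A : {set 'I_m}) (f g : col) : col :=
  [ffun i => if i \in A then f i else g i].
Definition normal (A : {set 'I_m}) (f : col) := restr A f == f.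
Definition sgn (A B : {set 'I_m}) : P :=
  (-1) ^+ #|[set ab : 'I_m * 'I_m |
              [&& ab.1 \in A, ab.2 \in B & (nat_of_ord ab.2 < nat_of_ord ab.1)%N]]|.
Definition emb (A : {set 'I_m}) (F : col -> P) : GCm :=
  \sum_(f | normal A f) mono (key A f) (F f).
Definition agree (A : {set 'I_m}) (f g : col) := [forall i in A, f i == g i].
Definition fc (c : 'I_3) : col := [ffun _ => c].
Implicit Types (A B : {set 'I_m}) (f g h : col) (F G : col -> P) (p q : P).

Lemma keyI A B f g : [disjoint A & B] -> key A f :&: key B g == set0.
Proof.
move=> dAB; apply/eqP/setP => -[i c]; rewrite !inE /=.
case iA: (i \in A) => //=; by rewrite (disjointFr dAB iA) andbF.
Qed.

Lemma keyU A B f g : [disjoint A & B] ->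
  key A f :|: key B g = key (A :|: B) (merge A f g).
Proof.
move=> dAB; apply/setP => -[i c]; rewrite !inE /= ffunE.
case iA: (i \in A) => //=; by rewrite (disjointFr dAB iA) andFb orbF.
Qed.

Lemma esign_key A B f g : [disjoint A & B] ->
  esign (key A f) (key B g) = sgn A B.
Proof.
move=> dAB; rewrite /esign /sgn; congr (_ ^+ _).
set IS := [set ab : 'I_m * 'I_m | _].
rewrite (_ : [set _ | _] = [set ((ab.1, f ab.1), (ab.2, g ab.2)) | ab in IS]).
  rewrite card_imset // => -[a b] [a' b'] /= [-> _ -> _] //.
apply/setP => -[[a c] [b d]]; rewrite !inE /=; apply/idP/imsetP.
  case/and3P => /andP[aA /eqP ->] /andP[bB /eqP ->] lt.
  exists (a, b) => //; rewrite inE /= aA bB /=.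
  have ab : nat_of_ord a != nat_of_ord b.
    by apply/negP => /eqP /ord_inj eab; subst; rewrite (disjointFr dAB aA) in bB.
  move: lt; rewrite /code /=; have := ltn_ord (f a); have := ltn_ord (g b).
  move: ab; lia.
case=> -[a' b']; rewrite inE /= => /and3P[aA bB lt] [-> -> -> ->].
rewrite aA bB !eqxx /= /code /=; have := ltn_ord (f a'); have := ltn_ord (g b').
move: lt; lia.
Qed.

Lemma gmul_key A B f g p q : [disjoint A & B] ->
  gmul (mono (key A f) p) (mono (key B g) q) =
  mono (key (A :|: B) (merge A f g)) (sgn A B * (p * q)).
Proof.
move=> dAB; rewrite gmul_mono (keyI _ _ _ _ dAB) (keyU _ _ _ _ dAB) (esign_key _ _ _ _ dAB) //.
Qed.

Lemma restr_merge_l A f g : restr A (merge A f g) = restr A f.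
Proof. by apply/ffunP => i; rewrite !ffunE; case: (i \in A). Qed.

Lemma restr_merge_r A B f g : [disjoint A & B] ->
  restr B (merge A f g) = restr B g.
Proof.
move=> dAB; apply/ffunP => i; rewrite !ffunE; case: ifP => // iB.
by rewrite (disjointFl dAB iB).
Qed.

Lemma normalE A f : normal A f -> restr A f = f.
Proof. by move/eqP. Qed.

Lemma restr_idem A f : restr A (restr A f) = restr A f.
Proof. by apply/ffunP => i; rewrite !ffunE; case: (i \in A). Qed.

Lemma merge_restr A B h : [disjoint A & B] -> normal (A :|: B) h ->
  merge A (restr A h) (restr B h) = h.
Proof.
move=> dAB /eqP nh; apply/ffunP => i; rewrite !ffunE.
case iA: (i \in A) => //.
rewrite -{2}nh ffunE inE iA /=; by case: ifP.
Qed.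

Lemma normal_merge A B f g : normal A f -> normal B g ->
  normal (A :|: B) (merge A f g).
Proof.
move=> /eqP nf /eqP ng; apply/eqP/ffunP => i; rewrite !ffunE inE.
case iA: (i \in A) => //=; case iB: (i \in B) => //=.
by rewrite -ng ffunE iB.
Qed.

Lemma gmul_emb A B F G : [disjoint A & B] ->
  gmul (emb A F) (emb B G) =
  emb (A :|: B) (fun h => sgn A B * (F (restr A h) * G (restr B h))).
Proof.
move=> dAB; rewrite /emb gmul_suml.
under eq_bigr => f nf do rewrite gmul_sumr.
under eq_bigr => f nf do under eq_bigr => g ng do rewrite gmul_key //.
rewrite pair_big_dep /=.
rewrite [RHS](reindex_onto (fun p : col * col => merge A p.1 p.2)
                (fun h => (restr A h, restr B h))) /=; last first.
  by move=> h nh; rewrite merge_restr.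
apply: eq_big => [[f g]|[f g]] /=.
  apply/idP/idP.
    case/andP=> nf ng; rewrite normal_merge //=.
    by rewrite restr_merge_l restr_merge_r // !normalE.
  case/andP=> _ /eqP [ef eg].
  rewrite restr_merge_l in ef; rewrite restr_merge_r // in eg.
  by rewrite /normal ef eg !eqxx.
case/andP=> nf ng.
by rewrite restr_merge_l restr_merge_r // !normalE.
Qed.

Lemma key_restr A f : key A (restr A f) = key A f.
Proof. by apply/setP => -[i c]; rewrite !inE ffunE /=; case: (i \in A). Qed.

Lemma mono_emb A g p : mono (key A g) p = emb A (fun f => if agree A f g then p else 0).
Proof.
rewrite /emb (bigD1 (restr A g)) /=; last by rewrite /normal restr_idem.
rewrite key_restr.
have -> : agree A (restr A g) g.
  by apply/forall_inP => i iA; rewrite ffunE iA.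
rewrite big1 ?addr0 // => f /andP[nf nfg].
case: ifP => [ag|]; last by rewrite mono0.
exfalso; move/negP: nfg; apply; apply/eqP; rewrite -(normalE _ _ nf).
apply/ffunP => i; rewrite !ffunE; case: ifP => // iA.
by move/forall_inP: ag => /(_ i iA) /eqP.
Qed.

Lemma embD A F G : emb A F + emb A G = emb A (fun f => F f + G f).
Proof. by rewrite /emb -big_split; apply: eq_bigr => f _; rewrite monoD. Qed.

Lemma embN A F : - emb A F = emb A (fun f => - F f).
Proof. by rewrite /emb -sumrN; apply: eq_bigr => f _; rewrite monoN. Qed.

Lemma embMn A F n : emb A F *+ n = emb A (fun f => F f *+ n).
Proof. by rewrite /emb -sumrMnl; apply: eq_bigr => f _; rewrite monoMn. Qed.

Lemma eq_emb A F G : (forall f, normal A f -> F f = G f) -> emb A F = emb A G.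
Proof. by move=> H; apply: eq_bigr => f nf; rewrite H. Qed.

Lemma gmul_ev_emb p A F : gmul (ev m p) (emb A F) = emb A (fun f => p * F f).
Proof. by rewrite /emb gmul_sumr; apply: eq_bigr => f _; rewrite gmul_ev_mono. Qed.

Definition ltord (i j : 'I_m) := (nat_of_ord i < nat_of_ord j)%N.

Lemma key1 j c : [set (j, c)] = key [set j] (fc c).
Proof. by apply/setP => -[i d]; rewrite !inE ffunE /= xpair_eqE; case: eqP => // ->. Qed.

Lemma merge_same A f : merge A f f = f.
Proof. by apply/ffunP => i; rewrite ffunE; case: ifP. Qed.

Lemma sgn_lt A B : (forall a b, a \in A -> b \in B -> ltord a b) -> sgn A B = 1.
Proof.
move=> H; rewrite /sgn (_ : [set _ | _] = set0) ?cards0 ?expr0 //.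
apply/setP => -[a b]; rewrite !inE /=.
case aA: (a \in A) => //; case bB: (b \in B) => //=.
by rewrite ltnNge (ltnW (H a b aA bB)).
Qed.

Lemma foldr_mono c (s : seq 'I_m) : sorted ltord s ->
  foldr (@gmul m) (gone m) (map (fun j => odd_gen (j, c)) s) =
  mono (key [set i in s] (fc c)) 1.
Proof.
elim: s => [|a s IH] /=.
  move=> _; rewrite (_ : key _ _ = set0) //.
  by apply/setP => -[i d]; rewrite !inE.
move=> ps; rewrite IH; last exact: path_sorted ps.
have allg : all (ltord a) s.
  apply: order_path_min ps; rewrite /ltord => x y z; exact: ltn_trans.
rewrite (_ : odd_gen _ = mono (key [set a] (fc c)) 1); last first.
  by rewrite -key1.
rewrite gmul_key; last first.
  rewrite disjoints1 inE; apply/negP => aS.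
  by have := allP allg a aS; rewrite /ltord ltnn.
rewrite merge_same sgn_lt ?mulr1 //; last first.
  move=> x y; rewrite inE => /eqP -> ; rewrite inE => yS; exact: (allP allg).
congr mono; congr key; apply/setP => i; rewrite !inE.
done.
Qed.

Lemma sorted_enum_set (I : {set 'I_m}) : sorted ltord (enum I).
Proof.
have H : sorted ltord (enum 'I_m).
  have := iota_ltn_sorted 0 m; rewrite -val_enum_ord sorted_map.
  by apply: sub_sorted => x y.
have -> : enum I = filter (mem I) (enum 'I_m) by rewrite enumT.
apply: sorted_filter => //; rewrite /ltord => x y z; exact: ltn_trans.
Qed.

Lemma prodI_mono c (I : {set 'I_m}) :
  prodI (fun j => odd_gen (j, c)) I = mono (key I (fc c)) 1.
Proof. by rewrite /prodI foldr_mono ?sorted_enum_set // set_enum. Qed.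

Definition zc (k : nat) (I : {set 'I_m}) (f : col) : P :=
  (if agree I f (fc 0) then xv ^+ k.-1 else 0)
  + (if agree I f (fc 1) then yv ^+ k.-1 else 0)
  + (if agree I f (fc 2) then wv ^+ k.-1 else 0).

Lemma zE k I : z k I = emb I (zc k I).
Proof.
rewrite /z.
have -> : prodI (@alpha m) I = mono (key I (fc 0)) 1 := prodI_mono 0 I.
have -> : prodI (@beta m) I = mono (key I (fc 1)) 1 := prodI_mono 1 I.
have -> : prodI (@gamma m) I = mono (key I (fc 2)) 1 := prodI_mono 2 I.
by rewrite !gmul_ev_mono !mulr1 !mono_emb !embD.
Qed.

Lemma agree1 a f g : agree [set a] f g = (f a == g a).
Proof.
apply/forall_inP/idP => [H|/eqP H i]; first by apply: H; rewrite inE.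
by rewrite inE => /eqP ->; rewrite H.
Qed.

Lemma agreeU A B f g : agree (A :|: B) f g = agree A f g && agree B f g.
Proof.
apply/forall_inP/andP => [H|[/forall_inP H1 /forall_inP H2] i].
  by split; apply/forall_inP => i iA; apply: H; rewrite inE iA ?orbT.
by rewrite inE => /orP[/H1|/H2].
Qed.

Lemma agree0 f g : agree set0 f g.
Proof. by apply/forall_inP => i; rewrite inE. Qed.

Lemma ellE j : ell j = emb [set j] (fun _ => 1).
Proof.
rewrite /ell /alpha /beta /gamma.
have o : forall c, odd_gen (j, c) = mono (key [set j] (fc c)) 1.
  by move=> c; rewrite -key1.
rewrite !o !mono_emb !embD; apply: eq_emb => f _; rewrite !agree1 !ffunE.
by case: (f j) => [[|[|[|//]]] i] /=; rewrite ?addr0 ?add0r.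
Qed.

Lemma sgn1 a b : sgn [set a] [set b] = if (nat_of_ord b < nat_of_ord a)%N then -1 else 1.
Proof.
rewrite /sgn; set S := [set ab : 'I_m * 'I_m | _]; case: ifP => ba.
  have -> : S = [set (a, b)].
    apply/setP => -[x y]; rewrite !inE /= xpair_eqE.
    by case: eqP => [->|]; case: eqP => [->|] //=; rewrite ba.
  by rewrite cards1 expr1.
have -> : S = set0.
  apply/setP => -[x y]; rewrite !inE /=.
  by case: eqP => [->|]; case: eqP => [->|] //=; rewrite ba.
by rewrite cards0 expr0.
Qed.

Lemma sgnUl A1 A2 B : [disjoint A1 & A2] -> sgn (A1 :|: A2) B = sgn A1 B * sgn A2 B.
Proof.
move=> d12; rewrite /sgn -exprD; congr (_ ^+ _).
rewrite -cardsUI (_ : _ :&: _ = set0) ?cards0 ?addn0.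
  apply: eq_card => -[x y]; rewrite !inE /=.
  by case: (x \in A1); case: (x \in A2); rewrite /= ?orbb ?orbF.
apply/setP => -[x y]; rewrite !inE /=.
case x1: (x \in A1) => //=; by rewrite (disjointFr d12 x1) /= andbF.
Qed.

Lemma sgnUr A B1 B2 : [disjoint B1 & B2] -> sgn A (B1 :|: B2) = sgn A B1 * sgn A B2.
Proof.
move=> d12; rewrite /sgn -exprD; congr (_ ^+ _).
rewrite -cardsUI (_ : _ :&: _ = set0) ?cards0 ?addn0.
  apply: eq_card => -[x y]; rewrite !inE /=.
  by case: (x \in A); case: (y \in B1); case: (y \in B2); rewrite /= ?orbb ?orbF.
apply/setP => -[x y]; rewrite !inE /=.
case: (x \in A) => //=; case y1: (y \in B1) => //=; by rewrite (disjointFr d12 y1) /= ?andbF.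
Qed.

Lemma sum3 (F : 'I_m -> GCm) o0 o1 o2 :
  o0 != o1 -> o0 != o2 -> o1 != o2 ->
  (forall j, j != o0 -> j != o1 -> j != o2 -> F j = 0) ->
  \sum_j F j = F o0 + F o1 + F o2.
Proof.
move=> n01 n02 n12 H.
rewrite (bigD1 o0) //= (bigD1 o1) /=; last by rewrite eq_sym n01.
rewrite (bigD1 o2) /=; last by rewrite eq_sym n02 eq_sym n12.
rewrite big1 ?addr0 ?addrA // => j /andP[/andP[a b] c].
exact: H.
Qed.

Lemma sum2 (F : 'I_m -> GCm) o0 o1 :
  o0 != o1 -> (forall j, j != o0 -> j != o1 -> F j = 0) ->
  \sum_j F j = F o0 + F o1.
Proof.
move=> n01 H.
rewrite (bigD1 o0) //= (bigD1 o1) /=; last by rewrite eq_sym n01.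
rewrite big1 ?addr0 ?addrA // => j /andP[a b].
exact: H.
Qed.

Lemma gmul0emb A : (0 : GCm) = emb A (fun _ => 0).
Proof. by rewrite /emb big1 // => f _; rewrite mono0. Qed.

End Gen.
Arguments mono {m}.
Arguments key {m}.
Arguments restr {m}.
Arguments merge {m}.
Arguments normal {m}.
Arguments sgn {m}.
Arguments emb {m}.
Arguments agree {m}.
Arguments zc {m}.
Arguments ltord {m}.

Definition half : {mpoly rat[3]} := (2^-1 : rat)%:MP.
Lemma half2 : half * 2 = 1.
Proof. by rewrite /half -(mpolyC_nat 3 rat 2) -rmorphM /= mulVf. Qed.

Lemma affine_half (G : {mpoly rat[3]} -> {mpoly rat[3]}) :
  (forall h, G h = G 0 + h * (G 1 - G 0)) -> G 0 + G 1 = 0 -> G half = 0.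
Proof.
move=> H1 H2; rewrite H1 (_ : G 1 = - G 0); last first.
  by apply/eqP; rewrite -addr_eq0 addrC H2.
have -> : G 0 + half * (- G 0 - G 0) = G 0 - (half * 2) * G 0 by ring.
by rewrite half2 mul1r subrr.
Qed.

Ltac solve_half :=
  apply/eqP; rewrite -subr_eq0; apply/eqP;
  match goal with |- ?E = 0 =>
    let G := eval pattern half in E in
    lazymatch G with ?F half =>
      apply: (affine_half F); [move=> ? /=; ring | rewrite /=; ring] end end.

Definition tv (c : 'I_3) : {mpoly rat[3]} :=
  if c == 0 then xv else if c == 1 then yv else wv.

Lemma eqo m (i o : 'I_m) : (i == o) = (nat_of_ord i == nat_of_ord o).
Proof. by []. Qed.

Section Three.
Variable m : nat.
Variables o0 o1 o2 : 'I_m.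
Hypotheses (v0 : nat_of_ord o0 = 0%N) (v1 : nat_of_ord o1 = 1%N) (v2 : nat_of_ord o2 = 2%N).

Ltac setsolve := let i := fresh "i" in apply/setP => i; rewrite !inE ?eqo ?v0 ?v1 ?v2 /=;
  case: (nat_of_ord i) => [|[|[|?]]].
Ltac disj := rewrite -setI_eq0; apply/eqP; setsolve => //.

Lemma idx3 : idx m [:: 1; 2; 3]%N = [set o0; o1; o2].
Proof. by rewrite /idx; setsolve. Qed.
Lemma idx12 : idx m [:: 1; 2]%N = [set o0; o1].
Proof. by rewrite /idx; setsolve. Qed.
Lemma idx13 : idx m [:: 1; 3]%N = [set o0; o2].
Proof. by rewrite /idx; setsolve. Qed.
Lemma idx23 : idx m [:: 2; 3]%N = [set o1; o2].
Proof. by rewrite /idx; setsolve. Qed.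
Lemma idx1 : idx m [:: 1]%N = [set o0].
Proof. by rewrite /idx; setsolve. Qed.
Lemma idx2 : idx m [:: 2]%N = [set o1].
Proof. by rewrite /idx; setsolve. Qed.
Lemma idx3' : idx m [:: 3]%N = [set o2].
Proof. by rewrite /idx; setsolve. Qed.

Lemma e01 : (o0 == o1) = false. Proof. by rewrite eqo v0 v1. Qed.
Lemma e10 : (o1 == o0) = false. Proof. by rewrite eqo v0 v1. Qed.
Lemma e02 : (o0 == o2) = false. Proof. by rewrite eqo v0 v2. Qed.
Lemma e20 : (o2 == o0) = false. Proof. by rewrite eqo v0 v2. Qed.
Lemma e12 : (o1 == o2) = false. Proof. by rewrite eqo v1 v2. Qed.
Lemma e21 : (o2 == o1) = false. Proof. by rewrite eqo v1 v2. Qed.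

Local Notation I3 := [set o0; o1; o2].

Lemma U1_23 : o0 |: [set o1; o2] = I3. Proof. by setsolve. Qed.
Lemma U12_3 : [set o0; o1] :|: [set o2] = I3. Proof. by setsolve. Qed.
Lemma U13_2 : [set o0; o2] :|: [set o1] = I3. Proof. by setsolve. Qed.
Lemma U23_1 : [set o1; o2] :|: [set o0] = I3. Proof. by setsolve. Qed.
Lemma U2_13 : [set o1] :|: [set o0; o2] = I3. Proof. by setsolve. Qed.
Lemma U3_12 : [set o2] :|: [set o0; o1] = I3. Proof. by setsolve. Qed.

Lemma s12_3 : sgn [set o0; o1] [set o2] = 1.
Proof. by rewrite sgnUl ?sgn1 ?v0 ?v1 ?v2 ?mulr1 //; disj. Qed.
Lemma s13_2 : sgn [set o0; o2] [set o1] = -1.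
Proof. by rewrite sgnUl ?sgn1 ?v0 ?v1 ?v2 ?mul1r //; disj. Qed.
Lemma s23_1 : sgn [set o1; o2] [set o0] = 1.
Proof. by rewrite sgnUl ?sgn1 ?v0 ?v1 ?v2 ?mulrNN ?mulr1 //; disj. Qed.
Lemma s1_23 : sgn [set o0] [set o1; o2] = 1.
Proof. by rewrite sgnUr ?sgn1 ?v0 ?v1 ?v2 ?mulr1 //; disj. Qed.
Lemma s2_13 : sgn [set o1] [set o0; o2] = -1.
Proof. by rewrite sgnUr ?sgn1 ?v0 ?v1 ?v2 ?mulr1 //; disj. Qed.
Lemma s3_12 : sgn [set o2] [set o0; o1] = 1.
Proof. by rewrite sgnUr ?sgn1 ?v0 ?v1 ?v2 ?mulrNN ?mulr1 //; disj. Qed.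

Definition W1 (pw : nat) (a b c : 'I_3) : {mpoly rat[3]} :=
  if (a == b) && (b == c) then 0
  else if a == b then tv a ^+ pw * (half * rel1 - tv a - tv c)
  else if a == c then tv a ^+ pw * (half * rel1 - tv a - tv b)
  else if b == c then tv b ^+ pw * (half * rel1 - tv b - tv a) else 0.
Definition W2 (pw : nat) (a b c : 'I_3) : {mpoly rat[3]} :=
  if (a == b) && (b == c) then 0
  else if (a == b) || (a == c) then - (half * tv a ^+ pw)
  else if b == c then - (half * tv b ^+ pw) else 0.

Definition dd (k : nat) : {ffun 'I_m -> GC m} :=
  [ffun j => if j == o0 then z k [set o1; o2] else if j == o1 then - z k [set o0; o2]
             else if j == o2 then z k [set o0; o1] else 0].

Lemma id1 : Keq (z 3 I3 *+ 9)
       (gmul (z 2 [set o0; o1]) (z 2 [set o2])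
        - gmul (z 2 [set o0; o2]) (z 2 [set o1])
        + gmul (z 2 [set o1; o2]) (z 2 [set o0])
        + gmul (z 1 [set o0; o1]) (z 3 [set o2])
        - gmul (z 1 [set o0; o2]) (z 3 [set o1])
        + gmul (z 1 [set o1; o2]) (z 3 [set o0])).
Proof.
exists (emb I3 (fun f => W1 0 (f o0) (f o1) (f o2))),
       (emb I3 (fun f => W2 0 (f o0) (f o1) (f o2))), 0, (dd 3).
rewrite (@sum3 m _ o0 o1 o2 (negbT e01) (negbT e02) (negbT e12)); last first.
  by move=> j /negbTE h0 /negbTE h1 /negbTE h2; rewrite ffunE h0 h1 h2 gmul0r.
rewrite !ffunE eqxx e10 eqxx e20 e21 eqxx gmul0r addr0 !gmul_ev_emb !zE !ellE !embN.
rewrite !gmul_emb; try by disj.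
rewrite ?U1_23 ?U12_3 ?U13_2 ?U23_1 ?U2_13 ?U3_12 !(embN, embD, embMn).
apply: eq_emb => f nf.
rewrite /zc !agreeU !agree1 !ffunE !inE ?eqxx ?e01 ?e10 ?e02 ?e20 ?e12 ?e21 /=.
rewrite s12_3 s13_2 s23_1 s1_23 s2_13 s3_12.
move: (f o0) (f o1) (f o2) => a b c.
have H2 := half2.
case: a => [[|[|[|//]]] ?]; case: b => [[|[|[|//]]] ?]; case: c => [[|[|[|//]]] ?];
  rewrite /W1 /W2 /tv /rel1 /rel2 /=; solve_half.
Qed.


Lemma id2 : Keq (z 5 I3 *+ 9)
       (gmul (z 4 [set o0; o1]) (z 2 [set o2])
        - gmul (z 4 [set o0; o2]) (z 2 [set o1])
        + gmul (z 4 [set o1; o2]) (z 2 [set o0])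
        + gmul (z 3 [set o0; o1]) (z 3 [set o2])
        - gmul (z 3 [set o0; o2]) (z 3 [set o1])
        + gmul (z 3 [set o1; o2]) (z 3 [set o0])).
Proof.
exists (emb I3 (fun f => W1 2 (f o0) (f o1) (f o2))),
       (emb I3 (fun f => W2 2 (f o0) (f o1) (f o2))), 0, (dd 5).
rewrite (@sum3 m _ o0 o1 o2 (negbT e01) (negbT e02) (negbT e12)); last first.
  by move=> j /negbTE h0 /negbTE h1 /negbTE h2; rewrite ffunE h0 h1 h2 gmul0r.
rewrite !ffunE eqxx e10 eqxx e20 e21 eqxx gmul0r addr0 !gmul_ev_emb !zE !ellE !embN.
rewrite !gmul_emb; try by disj.
rewrite ?U1_23 ?U12_3 ?U13_2 ?U23_1 ?U2_13 ?U3_12 !(embN, embD, embMn).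
apply: eq_emb => f nf.
rewrite /zc !agreeU !agree1 !ffunE !inE ?eqxx ?e01 ?e10 ?e02 ?e20 ?e12 ?e21 /=.
rewrite s12_3 s13_2 s23_1 s1_23 s2_13 s3_12.
move: (f o0) (f o1) (f o2) => a b c.
have H2 := half2.
case: a => [[|[|[|//]]] ?]; case: b => [[|[|[|//]]] ?]; case: c => [[|[|[|//]]] ?];
  rewrite /W1 /W2 /tv /rel1 /rel2 /=; solve_half.
Qed.



Lemma part1 :
     Keq (z 3 (idx m [:: 1; 2; 3]%N) *+ 9)
       (gmul (z 2 (idx m [:: 1; 2]%N)) (z 2 (idx m [:: 3]%N))
        - gmul (z 2 (idx m [:: 1; 3]%N)) (z 2 (idx m [:: 2]%N))
        + gmul (z 2 (idx m [:: 2; 3]%N)) (z 2 (idx m [:: 1]%N))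
        + gmul (z 1 (idx m [:: 1; 2]%N)) (z 3 (idx m [:: 3]%N))
        - gmul (z 1 (idx m [:: 1; 3]%N)) (z 3 (idx m [:: 2]%N))
        + gmul (z 1 (idx m [:: 2; 3]%N)) (z 3 (idx m [:: 1]%N)))
   /\
     Keq (z 5 (idx m [:: 1; 2; 3]%N) *+ 9)
       (gmul (z 4 (idx m [:: 1; 2]%N)) (z 2 (idx m [:: 3]%N))
        - gmul (z 4 (idx m [:: 1; 3]%N)) (z 2 (idx m [:: 2]%N))
        + gmul (z 4 (idx m [:: 2; 3]%N)) (z 2 (idx m [:: 1]%N))
        + gmul (z 3 (idx m [:: 1; 2]%N)) (z 3 (idx m [:: 3]%N))
        - gmul (z 3 (idx m [:: 1; 3]%N)) (z 3 (idx m [:: 2]%N))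
        + gmul (z 3 (idx m [:: 2; 3]%N)) (z 3 (idx m [:: 1]%N))).
Proof.
rewrite idx3 idx12 idx13 idx23 idx1 idx2 idx3'.
split; [exact: id1 | exact: id2].
Qed.

End Three.

Section Two.
Variable m : nat.
Variables o0 o1 : 'I_m.
Hypotheses (v0 : nat_of_ord o0 = 0%N) (v1 : nat_of_ord o1 = 1%N).

Ltac setsolve2 := let i := fresh "i" in apply/setP => i; rewrite !inE ?eqo ?v0 ?v1 /=;
  case: (nat_of_ord i) => [|[|?]].
Ltac disj2 := rewrite -setI_eq0; apply/eqP; setsolve2 => //.

Lemma jdx12 : idx m [:: 1; 2]%N = [set o0; o1].
Proof. by rewrite /idx; setsolve2. Qed.
Lemma jdx1 : idx m [:: 1]%N = [set o0].
Proof. by rewrite /idx; setsolve2. Qed.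
Lemma jdx2 : idx m [:: 2]%N = [set o1].
Proof. by rewrite /idx; setsolve2. Qed.
Lemma f01 : (o0 == o1) = false. Proof. by rewrite eqo v0 v1. Qed.
Lemma f10 : (o1 == o0) = false. Proof. by rewrite eqo v0 v1. Qed.
Lemma V2_1 : [set o1] :|: [set o0] = [set o0; o1]. Proof. by setsolve2. Qed.

Definition e3 : {mpoly rat[3]} := xv * yv * wv.

Definition V1 (a b : 'I_3) : {mpoly rat[3]} :=
  if a == b then tv a ^+ 2 - half * rel1 * tv a else - (tv a * tv b).
Definition V2 (a b : 'I_3) : {mpoly rat[3]} :=
  if a == b then half * tv a else 0.
Definition X1 (a b : 'I_3) : {mpoly rat[3]} :=
  if a == b then tv a ^+ 2 * (tv a ^+ 2 - half * rel1 * tv a) else - (tv a ^+ 3 * tv b).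
Definition X2 (a b : 'I_3) : {mpoly rat[3]} :=
  if a == b then half * tv a ^+ 3 else 0.

Lemma id3 : Keq (z 4 [set o0; o1] *+ 3)
       (gmul (z 3 [set o0]) (z 2 [set o1]) + gmul (z 2 [set o0]) (z 3 [set o1])).
Proof.
exists (emb [set o0; o1] (fun f => V1 (f o0) (f o1))),
       (emb [set o0; o1] (fun f => V2 (f o0) (f o1))), 0,
       [ffun j => if j == o0 then emb [set o1] (fun _ => e3) else 0].
rewrite (@sum2 m _ o0 o1 (negbT f01)); last first.
  by move=> j /negbTE h0 /negbTE h1; rewrite ffunE h0 gmul0r.
rewrite !ffunE eqxx f10 !gmul0r ?addr0 !gmul_ev_emb !zE !ellE ?embN.
rewrite !gmul_emb; try by disj2.
rewrite ?V2_1 !(embN, embD, embMn).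
apply: eq_emb => f nf.
rewrite /zc !agreeU !agree1 !ffunE !inE ?eqxx ?f01 ?f10 /=.
rewrite !sgn1 v0 v1 /=.
move: (f o0) (f o1) => a b.
have H2 := half2.
case: a => [[|[|[|//]]] ?]; case: b => [[|[|[|//]]] ?];
  rewrite /V1 /V2 /tv /rel1 /rel2 /e3 /=; solve_half.
Qed.

Lemma id4 : Keq (z 6 [set o0; o1] *+ 3)
       (gmul (z 5 [set o0]) (z 2 [set o1]) + gmul (z 4 [set o0]) (z 3 [set o1])).
Proof.
exists (emb [set o0; o1] (fun f => X1 (f o0) (f o1))),
       (emb [set o0; o1] (fun f => X2 (f o0) (f o1))), 0,
       [ffun j => if j == o1 then emb [set o0] (fun f => - (e3 * tv (f o0) ^+ 2)) else 0].
rewrite (@sum2 m _ o0 o1 (negbT f01)); last first.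
  by move=> j /negbTE h0 /negbTE h1; rewrite ffunE h1 gmul0r.
rewrite !ffunE eqxx f01 !gmul0r ?addr0 ?add0r !gmul_ev_emb !zE !ellE ?embN.
rewrite !gmul_emb; try by disj2.
rewrite ?V2_1 !(embN, embD, embMn).
apply: eq_emb => f nf.
rewrite /zc !agreeU !agree1 !ffunE !inE ?eqxx ?f01 ?f10 /=.
rewrite !sgn1 v0 v1 /=.
move: (f o0) (f o1) => a b.
have H2 := half2.
case: a => [[|[|[|//]]] ?]; case: b => [[|[|[|//]]] ?];
  rewrite /X1 /X2 /tv /rel1 /rel2 /e3 /=; solve_half.
Qed.

Lemma part2 :
     Keq (z 4 (idx m [:: 1; 2]%N) *+ 3)
       (gmul (z 3 (idx m [:: 1]%N)) (z 2 (idx m [:: 2]%N))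
        + gmul (z 2 (idx m [:: 1]%N)) (z 3 (idx m [:: 2]%N)))
   /\
     Keq (z 6 (idx m [:: 1; 2]%N) *+ 3)
       (gmul (z 5 (idx m [:: 1]%N)) (z 2 (idx m [:: 2]%N))
        + gmul (z 4 (idx m [:: 1]%N)) (z 3 (idx m [:: 2]%N))).
Proof.
rewrite jdx12 jdx1 jdx2.
split; [exact: id3 | exact: id4].
Qed.

End Two.

Lemma part3 m : Keq (z 6 (set0 : {set 'I_m})) 0.
Proof.
exists (emb set0 (fun _ => (xv ^+ 4 + yv ^+ 4 + wv ^+ 4) - half * rel1 * (xv ^+ 3 + yv ^+ 3 + wv ^+ 3))),
       (emb set0 (fun _ => half * (xv ^+ 3 + yv ^+ 3 + wv ^+ 3) + xv * yv * wv)), 0,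
       [ffun _ => 0].
rewrite big1; last by move=> j _; rewrite ffunE gmul0r.
rewrite subr0 gmul0r !addr0 !gmul_ev_emb zE embD.
apply: eq_emb => f nf.
rewrite /zc !agree0 /=.
have H2 := half2.
rewrite /rel1 /rel2; solve_half.
Qed.

Theorem lemma6p3 (m : nat) :
  ((3 <= m)%N ->
     Keq (z 3 (idx m [:: 1; 2; 3]%N) *+ 9)
       (gmul (z 2 (idx m [:: 1; 2]%N)) (z 2 (idx m [:: 3]%N))
        - gmul (z 2 (idx m [:: 1; 3]%N)) (z 2 (idx m [:: 2]%N))
        + gmul (z 2 (idx m [:: 2; 3]%N)) (z 2 (idx m [:: 1]%N))
        + gmul (z 1 (idx m [:: 1; 2]%N)) (z 3 (idx m [:: 3]%N))
        - gmul (z 1 (idx m [:: 1; 3]%N)) (z 3 (idx m [:: 2]%N))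
        + gmul (z 1 (idx m [:: 2; 3]%N)) (z 3 (idx m [:: 1]%N)))
   /\
     Keq (z 5 (idx m [:: 1; 2; 3]%N) *+ 9)
       (gmul (z 4 (idx m [:: 1; 2]%N)) (z 2 (idx m [:: 3]%N))
        - gmul (z 4 (idx m [:: 1; 3]%N)) (z 2 (idx m [:: 2]%N))
        + gmul (z 4 (idx m [:: 2; 3]%N)) (z 2 (idx m [:: 1]%N))
        + gmul (z 3 (idx m [:: 1; 2]%N)) (z 3 (idx m [:: 3]%N))
        - gmul (z 3 (idx m [:: 1; 3]%N)) (z 3 (idx m [:: 2]%N))
        + gmul (z 3 (idx m [:: 2; 3]%N)) (z 3 (idx m [:: 1]%N))))
  /\
  ((2 <= m)%N ->
     Keq (z 4 (idx m [:: 1; 2]%N) *+ 3)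
       (gmul (z 3 (idx m [:: 1]%N)) (z 2 (idx m [:: 2]%N))
        + gmul (z 2 (idx m [:: 1]%N)) (z 3 (idx m [:: 2]%N)))
   /\
     Keq (z 6 (idx m [:: 1; 2]%N) *+ 3)
       (gmul (z 5 (idx m [:: 1]%N)) (z 2 (idx m [:: 2]%N))
        + gmul (z 4 (idx m [:: 1]%N)) (z 3 (idx m [:: 2]%N))))
  /\
  Keq (z 6 (set0 : {set 'I_m})) 0.
Proof.
split; [move=> H3 | split; [move=> H2 | exact: part3]].
  have p0 : (0 < m)%N by lia.
  have p1 : (1 < m)%N by lia.
  have p2 : (2 < m)%N by lia.
  exact: (@part1 m (Ordinal p0) (Ordinal p1) (Ordinal p2) erefl erefl erefl).
have p0 : (0 < m)%N by lia.
have p1 : (1 < m)%N by lia.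
exact: (@part2 m (Ordinal p0) (Ordinal p1) erefl erefl).
Qed.
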